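(* Let $(\Lambda,d)$ be a $k$-graph and let $(\overline{\Lambda},\overline d)$ be its extension as described in the context. If $\Lambda$ is finitely aligned, then $\overline{\Lambda}$ is finitely aligned. If $\Lambda$ is row-finite, then $\overline{\Lambda}$ is row-finite.
   Context: A $k$-graph $(\Lambda,d)$ is a countable category with a degree functor $d:\Lambda\to\mathbb{N}^k$ satisfying unique factorization; $\Lambda^0$ vertices, $r,s$ range/source, $v\Lambda^n=\{\lambda:r(\lambda)=v,d(\lambda)=n\}$; $e_i$ standard basis, $\le$ coordinatewise, $\vee,\wedge$ coordinatewise max/min. A $k$-graph $\Gamma$ is row-finite if $v\Gamma^n$ is finite for all vertices $v$ and $n\in\mathbb{N}^k$; it is finitely aligned if $\Gamma^{\min}(\lambda,\mu)=\{(\alpha,\beta):\lambda\alpha=\mu\beta,\ d(\lambda\alpha)=d(\lambda)\vee d(\mu)\}$ is finite for all $\lambda,\mu\in\Gamma$. For $m\in(\mathbb{N}\cup\{\infty\})^k$, $\Omega_{k,m}$ has objects $\{p\in\mathbb{N}^k:p\le m\}$, morphisms $(p,q)$, $p\le q\le m$, $r(p,q)=p$, $s(p,q)=q$, $d(p,q)=q-p$. A graph morphism $x:\Omega_{k,m}\to\Lambda$ is a degree-preserving functor; $d(x)=m$, $x(a,b)=x((a,b))$, $x(a)=x(a,a)$. It is a boundary path if there is $n_x\in\mathbb{N}^k$, $n_x\le d(x)$, with $x(p)\Lambda^{e_i}=\emptyset$ whenever $p\in\mathbb{N}^k$, $n_x\le p\le d(x)$, $p_i=d(x)_i$; $\Lambda^{\le\infty}$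 is the set of boundary paths. $\sigma^px(a,b)=x(a+p,b+p)$; $\lambda x$ is the concatenation of $\lambda$ and $x$. $V_\Lambda=\{(x;m):x\in\Lambda^{\le\infty},m\in\mathbb{N}^k,m\not\le d(x)\}$, $(x;m)\approx(y;p)$ iff $x(m\wedge d(x))=y(p\wedge d(y))$ and $m-m\wedge d(x)=p-p\wedge d(y)$; classes $[x;m]$ form $\widetilde{V_\Lambda}$. $P_\Lambda=\{(x;(m,n)):x\in\Lambda^{\le\infty},m\le n\in\mathbb{N}^k,n\not\le d(x)\}$, $(x;(m,n))\sim(y;(p,q))$ iff $x(m\wedge d(x),n\wedge d(x))=y(p\wedge d(y),q\wedge d(y))$, $m-m\wedge d(x)=p-p\wedge d(y)$, $n-m=q-p$; classes $[x;(m,n)]$ form $\widetilde{P_\Lambda}$. The extension $\overline{\Lambda}$ is the $k$-graph with objects $\Lambda^0\sqcup\widetilde{V_\Lambda}$ and morphisms $\Lambda\sqcup\widetilde{P_\Lambda}$: on $\Lambda$ everything is as in $\Lambda$; $\overline r([x;(m,n)])=x(m)$ if $m\le d(x)$, else $[x;m]$; $\overline s([x;(m,n)])=[x;n]$; identity at $[x;m]$ is $[x;(m,m)]$; $\lambda[x;(m,n)]=[\lambda\sigma^mx;(0,d(\lambda)+n-m)]$; $[x;(m,n)][y;(p,q)]=[z;(m,n+q-p)]$ with $z=x(0,n\wedge d(x))\sigma^{p\wedge d(y)}y$; degree $\overline d|_\Lambda=d$, $\overline d([x;(m,n)])=n-m$. *)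

(* Defs.v *)
From Stdlib Require Import ClassicalEpsilon List.
From mathcomp Require Import all_boot.
Set Implicit Arguments.
Unset Strict Implicit.
Unset Printing Implicit Defensive.

Definition NN (k : nat) := {ffun 'I_k -> nat}.
Definition nn0 (k : nat) : NN k := [ffun _ => 0].
Definition nnadd k (m n : NN k) : NN k := [ffun i => m i + n i].
(* truncated subtraction; only used when n <= m coordinatewise *)
Definition nnsub k (m n : NN k) : NN k := [ffun i => m i - n i].
Definition nnmax k (m n : NN k) : NN k := [ffun i => maxn (m i) (n i)].
Definition nnmin k (m n : NN k) : NN k := [ffun i => minn (m i) (n i)].
Definition nnle k (m n : NN k) : bool := [forall i, m i <= n i].
Definition nnbasis k (i : 'I_k) : NN k := [ffun j => if j == i then 1 else 0].

(* extended degrees: None stands for infinity *)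
Definition ENN (k : nat) := 'I_k -> option nat.
Definition le_e k (p : NN k) (m : ENN k) : bool :=
  [forall i, match m i with Some a => p i <= a | None => true end].
Definition meet_e k (p : NN k) (m : ENN k) : NN k :=
  [ffun i => match m i with Some a => minn (p i) a | None => p i end].
Definition add_e k (p : NN k) (m : ENN k) : ENN k :=
  fun i => match m i with Some a => Some (p i + a) | None => None end.
Definition sub_e k (m : ENN k) (p : NN k) : ENN k :=
  fun i => match m i with Some a => Some (a - p i) | None => None end.

(* A countable category with a degree functor to N^k satisfying the
   unique factorisation property.  [comp l m] is the composite  l m
   (meaningful when src l = rng m); the value otherwise is irrelevant. *)
Record kgraph (k : nat) := KGraph {
  Obj : Type;
  Mor : Type;
  src : Mor -> Obj;
  rng : Mor -> Obj;
  comp : Mor -> Mor -> Mor;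
  idm : Obj -> Mor;
  deg : Mor -> NN k;
  Obj_countable : exists f : Obj -> nat, injective f;
  Mor_countable : exists f : Mor -> nat, injective f;
  src_idm : forall v, src (idm v) = v;
  rng_idm : forall v, rng (idm v) = v;
  src_comp : forall l m, src l = rng m -> src (comp l m) = src m;
  rng_comp : forall l m, src l = rng m -> rng (comp l m) = rng l;
  comp_idl : forall l, comp (idm (rng l)) l = l;
  comp_idr : forall l, comp l (idm (src l)) = l;
  comp_assoc : forall l m n, src l = rng m -> src m = rng n ->
      comp (comp l m) n = comp l (comp m n);
  deg_idm : forall v, deg (idm v) = nn0 k;
  deg_comp : forall l m, src l = rng m -> deg (comp l m) = nnadd (deg l) (deg m);
  unique_fact : forall l (m n : NN k), deg l = nnadd m n ->
      exists! mn : Mor * Mor,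
        src mn.1 = rng mn.2 /\ comp mn.1 mn.2 = l /\ deg mn.1 = m /\ deg mn.2 = n
}.

Arguments Obj {k} _.
Arguments Mor {k} _.
Arguments src {k _} _.
Arguments rng {k _} _.
Arguments comp {k _} _ _.
Arguments idm {k _} _.
Arguments deg {k _} _.

Section KGraphs.
Variables (k : nat) (G : kgraph k).

Definition row_finite : Prop :=
  forall (v : Obj G) (n : NN k), exists L : list (Mor G),
    forall l : Mor G, rng l = v -> deg l = n -> In l L.

(* finitely aligned: G^min(l,m) finite for all l, m *)
Definition finitely_aligned : Prop :=
  forall l m : Mor G, exists L : list (Mor G * Mor G),
    forall a b : Mor G, src l = rng a -> src m = rng b ->
      comp l a = comp m b -> deg (comp l a) = nnmax (deg l) (deg m) ->
      In (a, b) L.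

(* data of a graph morphism x : Omega_{k, pdeg} -> G:
   pmor p q = x(p,q) and pobj p = the vertex x(p); values outside
   p <= q <= pdeg are irrelevant. *)
Record kpath := KPath {
  pdeg : ENN k;
  pmor : NN k -> NN k -> Mor G;
  pobj : NN k -> Obj G
}.

Definition is_graph_morphism (x : kpath) : Prop :=
  (forall p, le_e p (pdeg x) -> pmor x p p = idm (pobj x p)) /\
  (forall p q, nnle p q -> le_e q (pdeg x) ->
     rng (pmor x p q) = pobj x p /\ src (pmor x p q) = pobj x q /\
     deg (pmor x p q) = nnsub q p) /\
  (forall p q r, nnle p q -> nnle q r -> le_e r (pdeg x) ->
     comp (pmor x p q) (pmor x q r) = pmor x p r).

Definition is_boundary (x : kpath) : Prop :=
  is_graph_morphism x /\
  exists nx : NN k, le_e nx (pdeg x) /\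
    forall p : NN k, nnle nx p -> le_e p (pdeg x) ->
      forall i : 'I_k, pdeg x i = Some (p i) ->
        forall l : Mor G, rng l = pobj x p -> deg l <> nnbasis i.

Definition shift (p : NN k) (x : kpath) : kpath :=
  KPath (sub_e (pdeg x) p) (fun a b => pmor x (nnadd a p) (nnadd b p))
        (fun a => pobj x (nnadd a p)).

Definition concat_spec (l : Mor G) (x z : kpath) : Prop :=
  is_graph_morphism z /\
  (forall i, pdeg z i = add_e (deg l) (pdeg x) i) /\
  pmor z (nn0 k) (deg l) = l /\
  (forall a b, nnle a b -> le_e b (pdeg x) ->
     pmor z (nnadd a (deg l)) (nnadd b (deg l)) = pmor x a b).

Definition concat (l : Mor G) (x : kpath) : kpath :=
  epsilon (inhabits x) (concat_spec l x).

(* objects: G^0 (inl) and representatives (x;m) of V_G (inr) *)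
Definition BObj := (Obj G + (kpath * NN k))%type.
(* morphisms: G (inl) and representatives (x;(m,n)) of P_G (inr) *)
Definition BMor := (Mor G + (kpath * NN k * NN k))%type.

Definition validO (v : BObj) : Prop :=
  match v with
  | inl _ => True
  | inr (x, m) => is_boundary x /\ ~~ le_e m (pdeg x)
  end.

Definition validM (a : BMor) : Prop :=
  match a with
  | inl _ => True
  | inr (x, m, n) => is_boundary x /\ nnle m n /\ ~~ le_e n (pdeg x)
  end.

(* equality of objects of \bar G : equality on G^0, ~~ (approx) on V_G *)
Definition eqO (v w : BObj) : Prop :=
  match v, w with
  | inl u, inl u' => u = u'
  | inr (x, m), inr (y, p) =>
      pobj x (meet_e m (pdeg x)) = pobj y (meet_e p (pdeg y)) /\
      nnsub m (meet_e m (pdeg x)) = nnsub p (meet_e p (pdeg y))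
  | _, _ => False
  end.

(* equality of morphisms of \bar G : equality on G, ~ on P_G *)
Definition eqM (a b : BMor) : Prop :=
  match a, b with
  | inl l, inl l' => l = l'
  | inr (x, m, n), inr (y, p, q) =>
      pmor x (meet_e m (pdeg x)) (meet_e n (pdeg x)) =
        pmor y (meet_e p (pdeg y)) (meet_e q (pdeg y)) /\
      nnsub m (meet_e m (pdeg x)) = nnsub p (meet_e p (pdeg y)) /\
      nnsub n m = nnsub q p
  | _, _ => False
  end.

Definition bdeg (a : BMor) : NN k :=
  match a with
  | inl l => deg l
  | inr (x, m, n) => nnsub n m
  end.

Definition brng (a : BMor) : BObj :=
  match a with
  | inl l => inl (rng l)
  | inr (x, m, n) => if le_e m (pdeg x) then inl (pobj x m) else inr (x, m)
  end.

Definition bsrc (a : BMor) : BObj :=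
  match a with
  | inl l => inl (src l)
  | inr (x, m, n) => inr (x, n)
  end.

(* composition (meaningful when bsrc a ~ brng b) *)
Definition bcomp (a b : BMor) : BMor :=
  match a, b with
  | inl l, inl l' => inl (comp l l')
  | inl l, inr (x, m, n) =>
      inr (concat l (shift m x), nn0 k, nnsub (nnadd (deg l) n) m)
  | inr (x, m, n), inr (y, p, q) =>
      inr (concat (pmor x (nn0 k) (meet_e n (pdeg x)))
                  (shift (meet_e p (pdeg y)) y),
           m, nnsub (nnadd n q) p)
  | inr _, inl _ => a
  end.

Definition ext_row_finite : Prop :=
  forall v : BObj, validO v -> forall n : NN k,
    exists L : list BMor,
      forall a : BMor, validM a -> eqO (brng a) v -> bdeg a = n ->
        exists a', In a' L /\ eqM a a'.

(* \bar G is finitely aligned: \bar G^min(l,m) is finite (up to the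
   identification of representatives) *)
Definition ext_finitely_aligned : Prop :=
  forall l m : BMor, validM l -> validM m ->
    exists L : list (BMor * BMor),
      forall a b : BMor, validM a -> validM b ->
        eqO (bsrc l) (brng a) -> eqO (bsrc m) (brng b) ->
        eqM (bcomp l a) (bcomp m b) ->
        bdeg (bcomp l a) = nnmax (bdeg l) (bdeg m) ->
        exists ab, In ab L /\ eqM a ab.1 /\ eqM b ab.2.

End KGraphs.

(* Main.v *)
Require Import Defs.
From Stdlib Require Import ClassicalEpsilon List.
From mathcomp Require Import all_boot.
From mathcomp Require Import zify.
Import Defs.
Set Implicit Arguments.
Unset Strict Implicit.
Unset Printing Implicit Defensive.

Ltac nnext := apply/ffunP => ?; rewrite ?ffunE.

Lemma nnleP k (p q : NN k) : reflect (forall i, p i <= q i) (nnle p q).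
Proof. exact: forallP. Qed.

Lemma le_eP k (p : NN k) (m : ENN k) :
  reflect (forall i, match m i with Some a => p i <= a | None => true end) (le_e p m).
Proof. exact: forallP. Qed.

Lemma nnaddE k (a b : NN k) i : nnadd a b i = a i + b i. Proof. by rewrite ffunE. Qed.
Lemma nnsubE k (a b : NN k) i : nnsub a b i = a i - b i. Proof. by rewrite ffunE. Qed.
Lemma nnmaxE k (a b : NN k) i : nnmax a b i = maxn (a i) (b i). Proof. by rewrite ffunE. Qed.
Lemma nn0E k i : nn0 k i = 0. Proof. by rewrite ffunE. Qed.
Lemma meet_eE k (p : NN k) m i :
  meet_e p m i = match m i with Some a => minn (p i) a | None => p i end.
Proof. by rewrite ffunE. Qed.

Lemma nneq k (a b : NN k) : (forall i, a i = b i) -> a = b.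
Proof. by move=> H; apply/ffunP. Qed.

Ltac nnsimpl := repeat progress rewrite ?nnaddE ?nnsubE ?nnmaxE ?nn0E ?meet_eE.

Lemma meet_le k (p : NN k) m : le_e (meet_e p m) m.
Proof. apply/le_eP => i; nnsimpl; case: (m i) => // a; lia. Qed.

Lemma meet_mono k (p q : NN k) m : nnle p q -> nnle (meet_e p m) (meet_e q m).
Proof. move/nnleP=> H; apply/nnleP => i; nnsimpl; have := H i; case: (m i) => // a; lia. Qed.

Lemma meet_id k (p : NN k) m : le_e p m -> meet_e p m = p.
Proof. move/le_eP=> H; apply: nneq => i; nnsimpl; have := H i; case: (m i) => // a; lia. Qed.

Lemma nnle_refl k (p : NN k) : nnle p p.
Proof. by apply/nnleP. Qed.

Lemma nnle0 k (p : NN k) : nnle (nn0 k) p.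
Proof. by apply/nnleP => i; nnsimpl. Qed.

Lemma le_e0 k (m : ENN k) : le_e (nn0 k) m.
Proof. apply/le_eP => i; nnsimpl; by case: (m i). Qed.

Lemma le_e_trans k (p q : NN k) m : nnle p q -> le_e q m -> le_e p m.
Proof. move/nnleP=> H /le_eP H2; apply/le_eP => i; have := H i; have:= H2 i; case: (m i) => // a; lia. Qed.

Lemma nnle_trans k (p q r : NN k) : nnle p q -> nnle q r -> nnle p r.
Proof. move/nnleP=> H /nnleP H2; apply/nnleP => i; have := H i; have:= H2 i; lia. Qed.

Lemma choose_reps (A B : Type) (P : A -> Prop) (f : A -> B) (K : list B) :
  (forall a, P a -> In (f a) K) ->
  exists L : list A, forall a, P a -> exists a', In a' L /\ f a = f a'.
Proof.
elim: K P => [|b K IH] P HP.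
  by exists nil => a Pa; case: (HP a Pa).
have [L HL] : exists L : list A, forall a, (P a /\ f a <> b) -> exists a', In a' L /\ f a = f a'.
  apply: IH => a [Pa Hb]; by case: (HP a Pa) => // E; case: Hb.
case: (classic (exists a0, P a0 /\ f a0 = b)) => [[a0 [Pa0 Ea0]]|Hn].
  exists (a0 :: L) => a Pa; case: (classic (f a = b)) => [E|Hb].
    by exists a0; split; [left| rewrite E Ea0].
  by have [a' [? ?]] := HL a (conj Pa Hb); exists a'; split; [right|].
exists L => a Pa; case: (classic (f a = b)) => [E|Hb].
  by case: Hn; exists a.
exact: HL.
Qed.

Lemma mem_In (T : eqType) (x : T) (s : seq T) : x \in s -> In x s.
Proof. elim: s => //= y s IH; rewrite in_cons => /orP [/eqP->|/IH]; auto. Qed.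

Lemma nn_below k (n : NN k) : exists Q : list (NN k), forall q, nnle q n -> In q Q.
Proof.
set N := \max_(i < k) n i.
exists (List.map (fun f : {ffun 'I_k -> 'I_N.+1} => [ffun i => val (f i)] : NN k)
   (enum {ffun 'I_k -> 'I_N.+1})).
move=> q /nnleP Hq; apply/in_map_iff.
exists [ffun i => inord (q i)]; split; last by apply: mem_In; rewrite mem_enum.
apply: nneq => i; rewrite !ffunE /= inordK //.
have := Hq i; have := @leq_bigmax (ordinal k) (fun i => n i) i; rewrite -/N; lia.
Qed.


Section Seg.
Variables (k : nat) (G : kgraph k).
Implicit Types (l a b c : Mor G) (p q r : NN k).

Lemma nnadd_cancel p q r : nnadd p q = nnadd p r -> q = r.
Proof. move=> E; apply: nneq => i; have := congr1 (fun f : NN k => f i) E; nnsimpl; lia. Qed.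

Lemma ufact_uniq a1 b1 a2 b2 : src a1 = rng b1 -> src a2 = rng b2 ->
  comp a1 b1 = comp a2 b2 -> deg a1 = deg a2 -> a1 = a2 /\ b1 = b2.
Proof.
move=> S1 S2 E D.
have Hd := deg_comp S1.
have [[p q] [[H1 [H2 [H3 H4]]] Hu]] := unique_fact Hd.
have U1 := Hu (a1, b1) (conj S1 (conj erefl (conj erefl erefl))).
have Db : deg b2 = deg b1.
  apply: (@nnadd_cancel (deg a1)); rewrite -(deg_comp S1) E (deg_comp S2) D //.
have U2 := Hu (a2, b2) (conj S2 (conj (esym E) (conj (esym D) Db))).
by rewrite U1 in U2; case: U2.
Qed.

Lemma deg0_idm l : deg l = nn0 k -> l = idm (rng l).
Proof.
move=> D.
have Hd : deg l = nnadd (nn0 k) (nn0 k) by rewrite D; apply: nneq => i; nnsimpl.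
have [[p q] [_ Hu]] := unique_fact Hd.
have U1 := Hu (idm (rng l), l) (conj (src_idm _) (conj (comp_idl _) (conj (deg_idm _) D))).
have U2 := Hu (l, idm (src l)) (conj (esym (rng_idm _)) (conj (comp_idr _) (conj D (deg_idm _)))).
by rewrite U1 in U2; case: U2.
Qed.

Definition segP l p q (m : Mor G) :=
  exists a c, src a = rng m /\ src m = rng c /\ comp a (comp m c) = l /\ deg a = p /\ deg m = nnsub q p.

Definition seg l p q : Mor G := epsilon (inhabits l) (segP l p q).

Lemma segP_ex l p q : nnle p q -> nnle q (deg l) -> exists m, segP l p q m.
Proof.
move=> /nnleP Hpq /nnleP Hq.
have E1 : deg l = nnadd p (nnsub (deg l) p).
  apply: nneq => i; nnsimpl; have := Hpq i; have := Hq i; lia.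
have [[a r] [[S1 [C1 [D1 D2]]] _]] := unique_fact E1.
have E2 : deg r = nnadd (nnsub q p) (nnsub (deg l) q).
  rewrite D2; apply: nneq => i; nnsimpl; have := Hpq i; have := Hq i; lia.
have [[m c] [[S2 [C2 [D3 D4]]] _]] := unique_fact E2.
exists m, a, c; simpl in *; split; [by rewrite S1 -C2 rng_comp|].
by split=> //; split; [rewrite C2|split].
Qed.

Lemma seg_spec l p q : nnle p q -> nnle q (deg l) -> segP l p q (seg l p q).
Proof. move=> H1 H2; have [m Hm] := segP_ex H1 H2; exact: (epsilon_spec _ _ (ex_intro _ m Hm)). Qed.

Lemma segP_uniq l p q m1 m2 : segP l p q m1 -> segP l p q m2 -> m1 = m2.
Proof.
move=> [a1 [c1 [S1 [T1 [E1 [D1 D1']]]]]] [a2 [c2 [S2 [T2 [E2 [D2 D2']]]]]].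
have [_ E] := ufact_uniq (a1:=a1) (b1:=comp m1 c1) (a2:=a2) (b2:=comp m2 c2)
  (etrans S1 (esym (rng_comp T1))) (etrans S2 (esym (rng_comp T2))) (etrans E1 (esym E2))
  (etrans D1 (esym D2)).
by have [] := ufact_uniq T1 T2 E (etrans D1' (esym D2')).
Qed.

Lemma seg_uniq l p q m : nnle p q -> nnle q (deg l) -> segP l p q m -> seg l p q = m.
Proof. move=> H1 H2 Hm; exact: segP_uniq (seg_spec H1 H2) Hm. Qed.

Lemma seg_deg l p q : nnle p q -> nnle q (deg l) -> deg (seg l p q) = nnsub q p.
Proof. by move=> H1 H2; have [a [c [_ [_ [_ [_ ?]]]]]] := seg_spec H1 H2. Qed.

Lemma seg_full l : seg l (nn0 k) (deg l) = l.
Proof.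
apply: seg_uniq; [exact: nnle0|exact: nnle_refl|].
exists (idm (rng l)), (idm (src l)); rewrite src_idm rng_idm comp_idr comp_idl deg_idm.
do 4 split=> //; apply: nneq => i; nnsimpl; lia.
Qed.

Lemma comp3 a b c : src a = rng b -> src b = rng c ->
  src (comp a b) = rng c /\ src a = rng (comp b c) /\ comp (comp a b) c = comp a (comp b c).
Proof.
move=> H1 H2; split; first by rewrite src_comp.
split; first by rewrite rng_comp.
exact: comp_assoc.
Qed.

Lemma seg_comp l p q r : nnle p q -> nnle q r -> nnle r (deg l) ->
  src (seg l p q) = rng (seg l q r) /\ comp (seg l p q) (seg l q r) = seg l p r.
Proof.
move=> Hpq Hqr Hr.
have Hpr := nnle_trans Hpq Hqr.
have [a [c [S1 [T1 [E1 [D1 D2]]]]]] := seg_spec Hpr Hr.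
set m := seg l p r in S1 T1 E1 D1 D2 *.
have E : deg m = nnadd (nnsub q p) (nnsub r q).
  move: Hpq Hqr => /nnleP Hpq /nnleP Hqr.
  rewrite D2; apply: nneq => i; nnsimpl; have := Hpq i; have := Hqr i; lia.
have [[m1 m2] [[S [C [F1 F2]]] _]] := unique_fact E; simpl in *.
have Hrm1 : rng m1 = rng m by rewrite -C rng_comp.
have Hsm2 : src m2 = src m by rewrite -C src_comp.
have Hq := nnle_trans Hqr Hr.
have Sm2c : src m2 = rng c by rewrite Hsm2.
have Am : comp m1 (comp m2 c) = comp m c by rewrite -comp_assoc // C.
have Sa1 : src a = rng m1 by rewrite S1 Hrm1.
have Sm1 : src m1 = rng (comp m2 c) by rewrite rng_comp.
have Seg1 : seg l p q = m1.
  apply: seg_uniq => //; exists a, (comp m2 c).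
  by rewrite Am E1 rng_comp //; do 4 split=> //.
have Seg2 : seg l q r = m2.
  apply: seg_uniq => //; exists (comp a m1), c.
  split; first by rewrite src_comp.
  split=> //.
  split; first by rewrite comp_assoc // Am.
  split=> //; rewrite deg_comp // D1 F1.
  by move: Hpq => /nnleP Hpq; apply: nneq => i; nnsimpl; have := Hpq i; lia.
by rewrite Seg1 Seg2 C.
Qed.

Lemma seg_rng l p q : nnle p q -> nnle q (deg l) -> rng (seg l p q) = rng (seg l p p).
Proof.
move=> H1 H2; have [_ <-] := seg_comp (nnle_refl p) H1 H2.
by rewrite rng_comp //; have [] := seg_comp (nnle_refl p) H1 H2.
Qed.

Lemma seg_src l p q : nnle p q -> nnle q (deg l) -> src (seg l p q) = rng (seg l q q).
Proof. move=> H1 H2; by have [] := seg_comp H1 (nnle_refl q) H2. Qed.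

Lemma seg_id l p : nnle p (deg l) -> seg l p p = idm (rng (seg l p p)).
Proof.
move=> H; apply: deg0_idm; rewrite seg_deg //; first by apply: nneq => i; nnsimpl; lia.
exact: nnle_refl.
Qed.

Lemma seg_prefix l1 l2 p q : src l1 = rng l2 -> nnle p q -> nnle q (deg l1) ->
  seg (comp l1 l2) p q = seg l1 p q.
Proof.
move=> S Hpq Hq.
have Hq' : nnle q (deg (comp l1 l2)).
  rewrite deg_comp //; move: Hq => /nnleP Hq; apply/nnleP => i; nnsimpl; have := Hq i; lia.
have [a [c [S1 [T1 [E1 [D1 D2]]]]]] := seg_spec Hpq Hq.
apply: seg_uniq => //; exists a, (comp c l2).
have Sc : src c = rng l2.
  by rewrite -S -E1 src_comp ?src_comp // rng_comp.
split=> //; split; first by rewrite rng_comp.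
split=> //.
rewrite -(comp_assoc T1 Sc) -(comp_assoc (l:=a)) ?E1 //.
  by rewrite rng_comp.
by rewrite src_comp.
Qed.

Lemma seg_suffix l1 l2 p q : src l1 = rng l2 -> nnle p q -> nnle q (deg l2) ->
  seg (comp l1 l2) (nnadd (deg l1) p) (nnadd (deg l1) q) = seg l2 p q.
Proof.
move=> S Hpq Hq.
have [a [c [S1 [T1 [E1 [D1 D2]]]]]] := seg_spec Hpq Hq.
have Ra : rng a = rng l2 by rewrite -E1 rng_comp // rng_comp.
apply: seg_uniq.
- by move: Hpq => /nnleP H; apply/nnleP => i; nnsimpl; have := H i; lia.
- rewrite deg_comp //; by move: Hq => /nnleP H; apply/nnleP => i; nnsimpl; have := H i; lia.
exists (comp l1 a), c.
have Sa' : src a = rng (comp (seg l2 p q) c) by rewrite rng_comp.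
have Sl1 : src l1 = rng a by rewrite Ra.
split; first by rewrite src_comp.
split; first by [].
split; first by rewrite comp_assoc // E1.
split; first by rewrite deg_comp // D1.
rewrite D2; apply: nneq => i; nnsimpl; lia.
Qed.

End Seg.


Lemma le_e_ext k (p : NN k) (m m' : ENN k) : (forall i, m i = m' i) -> le_e p m = le_e p m'.
Proof. move=> E; apply/le_eP/le_eP => H i; move: (H i); by rewrite E. Qed.

Lemma le_e_add_sub k (b p : NN k) d : le_e p d -> le_e b (sub_e d p) -> le_e (nnadd b p) d.
Proof.
move=> /le_eP H1 /le_eP H2; apply/le_eP => i; move: (H1 i) (H2 i); rewrite /sub_e; nnsimpl.
case: (d i) => // a; lia.
Qed.

Lemma le_e_sub_add k (b p : NN k) d : le_e b (add_e p d) -> le_e (nnsub b p) d.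
Proof.
move=> /le_eP H; apply/le_eP => i; move: (H i); rewrite /add_e; nnsimpl.
case: (d i) => // a; lia.
Qed.

Lemma le_e_add k (b p : NN k) d : le_e b d -> le_e (nnadd p b) (add_e p d).
Proof.
move=> /le_eP H; apply/le_eP => i; move: (H i); rewrite /add_e; nnsimpl.
case: (d i) => // a; lia.
Qed.

Ltac nnlia :=
  repeat match goal with H : is_true (nnle _ _) |- _ => move/nnleP: H => H end;
  first [ apply: nneq => i0 | apply/nnleP => i0 ];
  repeat match goal with H : forall _ : _, _ |- _ => have := H i0; clear H end;
  nnsimpl; lia.

Section Conc.
Variables (k : nat) (G : kgraph k).
Implicit Types (l : Mor G) (p q r a b c t : NN k) (x : kpath G).

Lemma shift_gm p x : is_graph_morphism x -> le_e p (pdeg x) -> is_graph_morphism (shift p x).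
Proof.
move=> [G1 [G2 G3]] Hp; rewrite /shift; split; [|split] => /=.
- move=> a Ha; apply: G1; exact: le_e_add_sub.
- move=> a b Hab Hb.
  have Hab' : nnle (nnadd a p) (nnadd b p) by nnlia.
  have [R [S D]] := G2 (nnadd a p) (nnadd b p) Hab' (le_e_add_sub Hp Hb).
  do 2 split=> //; rewrite D; nnlia.
- move=> a b c Hab Hbc Hc; apply: G3; try exact: le_e_add_sub.
  + by nnlia.
  + by nnlia.
Qed.

Section Constr.
Variables (l : Mor G) (x : kpath G).
Hypothesis (Hx : is_graph_morphism x) (Hs : src l = pobj x (nn0 k)).
Let dl := deg l.
Let D := add_e dl (pdeg x).
Let rho b := comp l (pmor x (nn0 k) (nnsub b dl)).

Lemma xprops p q : nnle p q -> le_e q (pdeg x) ->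
  rng (pmor x p q) = pobj x p /\ src (pmor x p q) = pobj x q /\ deg (pmor x p q) = nnsub q p.
Proof. by case: Hx => _ [H _]; apply: H. Qed.

Lemma xcomp p q r : nnle p q -> nnle q r -> le_e r (pdeg x) ->
  comp (pmor x p q) (pmor x q r) = pmor x p r.
Proof. by case: Hx => _ [_ H]; apply: H. Qed.

Lemma rho_src b : le_e b D -> src l = rng (pmor x (nn0 k) (nnsub b dl)).
Proof. move=> Hb; rewrite Hs; have [-> _] := xprops (nnle0 _) (le_e_sub_add Hb); done. Qed.

Lemma rho_deg b : le_e b D -> nnle b (deg (rho b)).
Proof.
move=> Hb; rewrite /rho deg_comp; last exact: rho_src.
have [_ [_ ->]] := xprops (nnle0 _) (le_e_sub_add Hb); rewrite -/dl; nnlia.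
Qed.

Lemma rho_ext b c : nnle b c -> le_e c D ->
  src (rho b) = rng (pmor x (nnsub b dl) (nnsub c dl)) /\
  rho c = comp (rho b) (pmor x (nnsub b dl) (nnsub c dl)).
Proof.
move=> Hbc Hc.
have Hc' := le_e_sub_add Hc.
have H1 : nnle (nnsub b dl) (nnsub c dl) by nnlia.
have Hb' := le_e_trans H1 Hc'.
have [R1 [S1 _]] := xprops (nnle0 _) Hb'.
have [R2 _] := xprops H1 Hc'.
have Hsrc : src (rho b) = rng (pmor x (nnsub b dl) (nnsub c dl)).
  by rewrite /rho src_comp ?S1 ?R2 // Hs R1.
split=> //.
rewrite /rho -(xcomp (nnle0 _) H1 Hc') comp_assoc //; first by rewrite Hs R1.
by rewrite S1 R2.
Qed.

Lemma zseg a b c : nnle a b -> nnle b c -> le_e c D -> seg (rho c) a b = seg (rho b) a b.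
Proof.
move=> Hab Hbc Hc; have [S E] := rho_ext Hbc Hc; rewrite E seg_prefix //.
apply: rho_deg; exact: le_e_trans Hbc Hc.
Qed.

Definition zpath : kpath G :=
  KPath D (fun a b => seg (rho b) a b) (fun a => rng (seg (rho a) a a)).

Lemma zpath_gm : is_graph_morphism zpath.
Proof.
split; [|split] => /=.
- move=> a Ha; apply: seg_id; exact: rho_deg.
- move=> a b Hab Hb; have Db := rho_deg Hb.
  split; first by rewrite seg_rng // (zseg (nnle_refl a) Hab Hb).
  split; first by rewrite seg_src.
  by rewrite seg_deg.
- move=> a b c Hab Hbc Hc.
  rewrite -(zseg Hab Hbc Hc); have [_ ->] := seg_comp Hab Hbc (rho_deg Hc); done.
Qed.

Lemma zpath_spec : concat_spec l x zpath.
Proof.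
split; first exact: zpath_gm.
split; first by [].
split => /=.
- have E : rho dl = l.
    rewrite /rho (_ : nnsub dl dl = nn0 k); last by nnlia.
    case: Hx => [H1 _]; rewrite H1 ?le_e0 // -Hs comp_idr //.
  by rewrite E seg_full.
- move=> a b Hab Hb.
  have Ha := le_e_trans Hab Hb.
  have E1 : nnsub (nnadd b dl) dl = b by nnlia.
  have [R1 [S1 D1]] := xprops (nnle0 _) Ha.
  have [R2 [S2 D2]] := xprops Hab Hb.
  have Hl1 : src l = rng (pmor x (nn0 k) a) by rewrite R1.
  have Hl2 : src (pmor x (nn0 k) a) = rng (pmor x a b) by rewrite S1 R2.
  rewrite /rho E1 -(xcomp (nnle0 _) Hab Hb) -comp_assoc //.
  have Dl1 : deg (comp l (pmor x (nn0 k) a)) = nnadd dl a by rewrite deg_comp // D1 /dl; nnlia.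
  have Hs2 : src (comp l (pmor x (nn0 k) a)) = rng (pmor x a b) by rewrite src_comp.
  have := seg_suffix Hs2 (nnle0 (deg (pmor x a b))) (nnle_refl _).
  rewrite seg_full Dl1 D2.
  have -> : nnadd (nnadd dl a) (nn0 k) = nnadd a dl by nnlia.
  have -> : nnadd (nnadd dl a) (nnsub b a) = nnadd b dl.
    by nnlia.
  done.
Qed.

End Constr.

Lemma concat_ok l x : is_graph_morphism x -> src l = pobj x (nn0 k) ->
  concat_spec l x (concat l x).
Proof.
move=> Hx Hs; rewrite /concat; apply: epsilon_spec; exists (zpath l x); exact: zpath_spec.
Qed.

Lemma concat_seg l x z a t : is_graph_morphism x -> concat_spec l x z ->
  nnle a (deg l) -> le_e t (pdeg x) ->
  src (seg l a (deg l)) = rng (pmor x (nn0 k) t) /\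
  pmor z a (nnadd (deg l) t) = comp (seg l a (deg l)) (pmor x (nn0 k) t).
Proof.
move=> Hx [[Z1 [Z2 Z3]] [Zd [Z0 Zs]]] Ha Ht.
have Hdt : le_e (nnadd (deg l) t) (pdeg z).
  by rewrite (le_e_ext _ Zd); apply: le_e_add.
have H1 : nnle (deg l) (nnadd (deg l) t) by nnlia.
have H0 := le_e_trans H1 Hdt.
have Ex : pmor z (deg l) (nnadd (deg l) t) = pmor x (nn0 k) t.
  have := Zs (nn0 k) t (nnle0 _) Ht.
  have -> : nnadd (nn0 k) (deg l) = deg l by nnlia.
  have -> : nnadd t (deg l) = nnadd (deg l) t by nnlia.
  done.
have Eseg : seg l a (deg l) = pmor z a (deg l).
  apply: seg_uniq => //; first exact: nnle_refl.
  have [R1 [S1 D1]] := Z2 _ _ (nnle0 a) (le_e_trans Ha H0).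
  have [R2 [S2 D2]] := Z2 _ _ Ha H0.
  exists (pmor z (nn0 k) a), (idm (src (pmor z a (deg l)))).
  split; first by rewrite S1 R2.
  split; first by rewrite rng_idm.
  split; first by rewrite comp_idr Z3 ?nnle0.
  split; first by rewrite D1; nnlia.
  by rewrite D2.
have [R2 [S2 D2]] := Z2 _ _ Ha H0.
have [R3 [S3 D3]] := Z2 _ _ H1 Hdt.
split; first by rewrite Eseg S2 -Ex R3.
by rewrite Eseg -Ex Z3.
Qed.

End Conc.


Ltac nnlia2 :=
  repeat match goal with H : is_true (nnle _ _) |- _ => move/nnleP: H => H end;
  first [ apply: nneq => i0 | apply/nnleP => i0 ];
  repeat match goal with H : forall _ : _, _ |- _ => have := H i0; clear H end;
  nnsimpl;
  repeat match goal with |- context [match ?e with Some _ => _ | None => _ end] => destruct e end;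
  lia.

Section Main.
Variables (k : nat) (G : kgraph k).

Definition keyM (a : BMor G) : Mor G + (Mor G * NN k * NN k) :=
  match a with
  | inl l => inl l
  | inr (x, m, n) => inr (pmor x (meet_e m (pdeg x)) (meet_e n (pdeg x)),
                         nnsub m (meet_e m (pdeg x)), nnsub n m)
  end.

Lemma keyM_eq a b : keyM a = keyM b -> eqM a b.
Proof.
case: a => [l|[[x m] n]]; case: b => [l'|[[y p] q]] //=; first by case.
by case=> -> -> ->.
Qed.

Definition keyp (a : BMor G) : Mor G :=
  match a with
  | inl l => l
  | inr (x, m, n) => pmor x (meet_e m (pdeg x)) (meet_e n (pdeg x))
  end.

Lemma eqM_keyp a b : eqM a b -> keyp a = keyp b.
Proof. by case: a => [l|[[x m] n]]; case: b => [l'|[[y p] q]] //= [->]. Qed.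

Lemma valid_key x m n : validM (inr (x, m, n)) ->
  rng (keyp (inr (x, m, n))) = pobj x (meet_e m (pdeg x)) /\
  deg (keyp (inr (x, m, n))) = nnsub (meet_e n (pdeg x)) (meet_e m (pdeg x)) /\
  nnle (deg (keyp (inr (x, m, n)))) (nnsub n m).
Proof.
move=> [[[_ [Gx _]] _] [Hmn _]] /=.
have [R [_ D]] := Gx _ _ (meet_mono (pdeg x) Hmn) (meet_le n (pdeg x)).
do 2 split=> //; rewrite D; nnlia2.
Qed.

Lemma paths_below (RF : row_finite G) w n :
  exists L, forall mu : Mor G, rng mu = w -> nnle (deg mu) n -> In mu L.
Proof.
have [Q HQ] := nn_below n.
suff [L HL] : exists L, forall mu : Mor G, rng mu = w -> In (deg mu) Q -> In mu L.
  by exists L => mu H1 H2; apply: HL => //; apply: HQ.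
elim: Q {HQ} => [|q Q [L HL]]; first by exists nil.
have [L1 H1] := RF w q.
exists (L1 ++ L)%list => mu Hr [E|I]; apply/in_app_iff; [left; exact: H1|right; exact: HL].
Qed.

Lemma ext_rf : row_finite G -> ext_row_finite G.
Proof.
move=> RF v _ n.
pose P a := validM a /\ eqO (brng a) v /\ bdeg a = n.
suff [K HK] : exists K, forall a, P a -> In (keyM a) K.
  have [L HL] := choose_reps HK.
  exists L => a H1 H2 H3; have [a' [I E]] := HL a (conj H1 (conj H2 H3)).
  by exists a'; split=> //; apply: keyM_eq.
rewrite /P {P}; case: v => [u|[y p]].
- have [L1 H1] := RF u n.
  have [L2 H2] := paths_below RF u n.
  exists (List.map inl L1 ++ List.map (fun mu => inr (mu, nn0 k, n)) L2)%list.
  move=> [l|[[x m] n']] [Va [Eo Ed]]; apply/in_app_iff.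
    by left; apply/in_map_iff; exists l; split=> //; apply: H1.
  right; apply/in_map_iff.
  have [R [_ Dl]] := valid_key Va.
  move: Eo; rewrite /brng; case E: (le_e m (pdeg x)) => //= Eo.
  exists (keyp (inr (x, m, n'))); split; last first.
    apply: H2; first by rewrite R meet_id.
    by rewrite -Ed.
  by rewrite /= meet_id // -Ed; congr (inr (_, _, _)); nnlia2.
- set w := pobj y (meet_e p (pdeg y)).
  have [L2 H2] := paths_below RF w n.
  exists (List.map (fun mu => inr (mu, nnsub p (meet_e p (pdeg y)), n)) L2).
  move=> [l|[[x m] n']] [Va [Eo Ed]]; first by [].
  apply/in_map_iff.
  have [R [_ Dl]] := valid_key Va.
  move: Eo; rewrite /brng; case E: (le_e m (pdeg x)) => //= -[Eo1 Eo2].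
  exists (keyp (inr (x, m, n'))); split; last first.
    apply: H2; first by rewrite R Eo1.
    by rewrite -Ed.
  by rewrite /= Eo2 -Ed.
Qed.


Definition Lam (l : BMor G) : Mor G :=
  match l with
  | inl l0 => l0
  | inr (x, m, n) => seg (pmor x (nn0 k) (meet_e n (pdeg x))) (meet_e m (pdeg x)) (meet_e n (pdeg x))
  end.

Definition cof (l : BMor G) : NN k :=
  match l with
  | inl _ => nn0 k
  | inr (x, m, n) => nnsub n (meet_e n (pdeg x))
  end.

Definition good (dL dA dl da : NN k) :=
  forall i, (dL i <= dl i /\ dA i = 0) \/ (dL i = dl i /\ dA i <= da i).

Lemma bcomp_inr l y p q : validM l -> validM (inr (y, p, q)) ->
  eqO (bsrc l) (brng (inr (y, p, q))) ->
  src (Lam l) = rng (keyp (inr (y, p, q))) /\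
  keyp (bcomp l (inr (y, p, q))) = comp (Lam l) (keyp (inr (y, p, q))) /\
  good (deg (Lam l)) (deg (keyp (inr (y, p, q)))) (bdeg l) (nnsub q p) /\
  nnsub p (meet_e p (pdeg y)) = cof l /\
  bdeg (bcomp l (inr (y, p, q))) = nnadd (bdeg l) (nnsub q p).
Proof.
move=> Vl Va Eo.
have [Ra [Da Ha]] := valid_key Va.
have [[Yp _] [Hpq _]] := Va.
case: l Vl Eo => [l0|[[x m] n]] Vl /=.
- case E: (le_e p (pdeg y)) => //= Eo.
  have Mp := meet_id E.
  have Gs := shift_gm Yp E.
  have Hs : src l0 = pobj (shift p y) (nn0 k).
    rewrite /shift /= (_ : nnadd (nn0 k) p = p) ?Eo //; nnlia2.
  have CS := concat_ok Gs Hs.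
  have CS' := CS; case: CS' => _ [Zd _].
  set z := concat l0 (shift p y) in CS Zd *.
  set t := nnsub (meet_e q (pdeg y)) p.
  have Ht : le_e t (pdeg (shift p y)).
    move/le_eP: E => E; apply/le_eP => i; move: (E i); rewrite /t /shift /sub_e /=; nnsimpl.
    case: (pdeg y i) => // a; lia.
  have [S1 E1] := concat_seg Gs CS (nnle0 _) Ht.
  move: S1 E1; rewrite seg_full => S1 E1.
  have M0 : meet_e (nn0 k) (pdeg z) = nn0 k by apply: nneq => i; nnsimpl; case: (pdeg z i) => [a|]; lia.
  have M1 : meet_e (nnsub (nnadd (deg l0) q) p) (pdeg z) = nnadd (deg l0) t.
    move/le_eP: E => E; move/nnleP: Hpq => Hpq.
    apply: nneq => i; rewrite meet_eE Zd /add_e /= /sub_e /t /=; move: (E i) (Hpq i); nnsimpl.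
    case: (pdeg y i) => [a|] /=; lia.
  have Ey : pmor (shift p y) (nn0 k) t = keyp (inr (y, p, q)).
    rewrite /shift /= Mp; congr (pmor y _ _); last first.
      move/le_eP: E => E; move/nnleP: Hpq => Hpq.
      apply: nneq => i; move: (E i) (Hpq i); rewrite /t; nnsimpl; case: (pdeg y i) => [a|] /=; lia.
    nnlia2.
  split; first by rewrite Ra Mp Eo.
  split; first by rewrite /= M0 M1 E1 Ey.
  split.
    move=> i; right; split=> //; move/nnleP: Ha => Ha; exact: Ha.
  split; first by rewrite Mp; nnlia2.
  nnlia2.
- case E: (le_e p (pdeg y)) => //= -[Eo1 Eo2].
  have [[Xp _] [Hmn Hn]] := Vl.
  have [_ [Gx _]] := Xp.
  have Hp' := meet_le p (pdeg y).
  have Gs := shift_gm Yp Hp'.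
  set L := pmor x (nn0 k) (meet_e n (pdeg x)).
  have [RL [SL DL]] := Gx _ _ (nnle0 (meet_e n (pdeg x))) (meet_le n (pdeg x)).
  have DL' : deg L = meet_e n (pdeg x) by rewrite DL; nnlia2.
  have Hs : src L = pobj (shift (meet_e p (pdeg y)) y) (nn0 k).
    by rewrite SL Eo1 /shift /= (_ : nnadd (nn0 k) _ = meet_e p (pdeg y)) //; nnlia2.
  have CS := concat_ok Gs Hs.
  have CS' := CS; case: CS' => _ [Zd _].
  set z := concat L (shift (meet_e p (pdeg y)) y) in CS Zd *.
  set t := nnsub (meet_e q (pdeg y)) (meet_e p (pdeg y)).
  have Ht : le_e t (pdeg (shift (meet_e p (pdeg y)) y)).
    apply/le_eP => i; rewrite /t /shift /sub_e /=; nnsimpl.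
    case: (pdeg y i) => // a; lia.
  have Hmn' : nnle (meet_e m (pdeg x)) (deg L) by rewrite DL'; apply: meet_mono.
  have [S1 E1] := concat_seg Gs CS Hmn' Ht.
  rewrite DL' in S1 E1.
  have Ec := fun i => congr1 (fun f : NN k => f i) Eo2.
  have M0 : meet_e m (pdeg z) = meet_e m (pdeg x).
    move/nnleP: Hmn => Hmn; move/nnleP: Hpq => Hpq.
    apply: nneq => i; rewrite !meet_eE Zd /add_e /= /sub_e DL' /=; move: (Ec i) (Hmn i) (Hpq i); nnsimpl.
    case: (pdeg x i) => [a|] /=; case: (pdeg y i) => [b|] /=; lia.
  have M1 : meet_e (nnsub (nnadd n q) p) (pdeg z) = nnadd (meet_e n (pdeg x)) t.
    move/nnleP: Hmn => Hmn; move/nnleP: Hpq => Hpq.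
    apply: nneq => i; rewrite !meet_eE Zd /add_e /= /sub_e DL' /t /=; move: (Ec i) (Hmn i) (Hpq i); nnsimpl.
    case: (pdeg x i) => [a|] /=; case: (pdeg y i) => [b|] /=; lia.
  have Ey : pmor (shift (meet_e p (pdeg y)) y) (nn0 k) t = keyp (inr (y, p, q)).
    rewrite /shift /=; congr (pmor y _ _); first nnlia2.
    move/nnleP: Hpq => Hpq.
    apply: nneq => i; move: (Hpq i); rewrite /t; nnsimpl; case: (pdeg y i) => [a|] /=; lia.
  rewrite Ey in S1 E1.
  split; first exact: S1.
  split; first by rewrite M0 M1 E1.
  split.
    move=> i; rewrite seg_deg ?Da; first last.
    - by rewrite DL'; exact: nnle_refl.
    - exact: meet_mono.
    move/nnleP: Hmn => Hmn; move/nnleP: Hpq => Hpq.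
    move: (Ec i) (Hmn i) (Hpq i); nnsimpl.
    case: (pdeg x i) => [a|] /=; case: (pdeg y i) => [b|] /=; lia.
  split; first by [].
  nnlia2.
Qed.


Lemma good_max (dL dA dM dB dl da dm db : NN k) :
  good dL dA dl da -> good dM dB dm db ->
  nnadd dL dA = nnadd dM dB ->
  nnadd dl da = nnmax dl dm -> nnadd dm db = nnmax dl dm ->
  nnadd dL dA = nnmax dL dM.
Proof.
move=> G1 G2 E E1 E2; apply: nneq => i.
move: (G1 i) (G2 i) (congr1 (fun f : NN k => f i) E) (congr1 (fun f : NN k => f i) E1)
  (congr1 (fun f : NN k => f i) E2); nnsimpl; lia.
Qed.

Lemma bcomp_inr_is_inr (l : BMor G) (t : kpath G * NN k * NN k) : exists u, bcomp l (inr t) = inr u.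
Proof. case: l => [l0|[[x m] n]]; case: t => [[y p] q]; by eexists. Qed.

Lemma ext_fa : finitely_aligned G -> ext_finitely_aligned G.
Proof.
move=> FA l m Vl Vm.
have [L0 H0] : exists L0 : list (Mor G * Mor G), forall l0 m0 a b,
    l = inl l0 -> m = inl m0 -> src l0 = rng a -> src m0 = rng b ->
    comp l0 a = comp m0 b -> deg (comp l0 a) = nnmax (deg l0) (deg m0) -> In (a, b) L0.
  case: l Vl => [l0|t] Vl; last by exists nil.
  case: m Vm => [m0|t] Vm; last by exists nil.
  have [L HL] := FA l0 m0.
  by exists L => l1 m1 a b [<-] [<-]; apply: HL.
have [L1 H1] := FA (Lam l) (Lam m).
set M := nnmax (bdeg l) (bdeg m).
pose P (ab : BMor G * BMor G) := validM ab.1 /\ validM ab.2 /\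
  eqO (bsrc l) (brng ab.1) /\ eqO (bsrc m) (brng ab.2) /\
  eqM (bcomp l ab.1) (bcomp m ab.2) /\ bdeg (bcomp l ab.1) = M.
pose f (ab : BMor G * BMor G) := (keyM ab.1, keyM ab.2).
suff [K HK] : exists K, forall ab, P ab -> In (f ab) K.
  have [L HL] := choose_reps HK.
  exists L => a b Va Vb E1 E2 E3 E4.
  have [[a' b'] [I Ef]] := HL (a, b) (conj Va (conj Vb (conj E1 (conj E2 (conj E3 E4))))).
  exists (a', b'); case: Ef => Ea Eb; split=> //; split; exact: keyM_eq.
exists (List.map (fun ab => (inl ab.1, inl ab.2)) L0 ++
        List.map (fun ab => (inr (ab.1, cof l, nnsub M (bdeg l)),
                             inr (ab.2, cof m, nnsub M (bdeg m)))) L1)%list.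
move=> [a b] HP; rewrite /P /= in HP; rewrite /f /=; clear P f.
move: HP => [Va [Vb [E1 [E2 [E3 E4]]]]]; apply/in_app_iff.
rewrite /M in E4 *; clear M.
case: a Va E1 E3 E4 => [a|[[y p] q]] Va E1 E3 E4;
  case: b Vb E2 E3 E4 => [b|[[y' p'] q']] Vb E2 E3 E4.
- case: l Vl E1 E3 E4 H0 H1 => [l0|[[x n1] n2]] Vl E1 E3 E4 H0 H1 //.
  case: m Vm E2 E3 E4 H0 H1 => [m0|[[x' n1'] n2']] Vm E2 E3 E4 H0 H1 //.
  left; apply/in_map_iff; exists (a, b); split=> //.
  move: E1 E2 E3 E4 => /= E1 E2 E3 E4.
  apply: (H0 l0 m0) => //.
- exfalso.
  case: l Vl E1 E3 E4 H0 H1 => [l0|[[x n1] n2]] Vl E1 E3 E4 H0 H1 //.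
  have [u Eu] := bcomp_inr_is_inr m (y', p', q').
  by move: E3; rewrite Eu /=.
- exfalso.
  case: m Vm E2 E3 E4 H0 H1 => [m0|[[x n1] n2]] Vm E2 E3 E4 H0 H1 //.
  have [u Eu] := bcomp_inr_is_inr l (y, p, q).
  move: E3; rewrite Eu /=; by case: u {Eu} => [[? ?] ?].
- right; apply/in_map_iff.
  have [Sa [Ka [Ga [Ca Da]]]] := bcomp_inr Vl Va E1.
  have [Sb [Kb [Gb [Cb Db]]]] := bcomp_inr Vm Vb E2.
  have E3' := eqM_keyp E3; rewrite Ka Kb in E3'.
  have E5 : bdeg (bcomp m (inr (y', p', q'))) = nnmax (bdeg l) (bdeg m).
    have [u Eu] := bcomp_inr_is_inr l (y, p, q).
    have [u' Eu'] := bcomp_inr_is_inr m (y', p', q').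
    move: E3 E4; rewrite Eu Eu'; case: u Eu => [[z1 m1] n1]; case: u' Eu' => [[z2 m2] n2] /= Eu Eu'.
    by case=> _ [_ ->].
  exists (keyp (inr (y, p, q)), keyp (inr (y', p', q'))); split.
    have Q1 : nnsub q p = nnsub (nnmax (bdeg l) (bdeg m)) (bdeg l) by rewrite -E4 Da; nnlia2.
    have Q2 : nnsub q' p' = nnsub (nnmax (bdeg l) (bdeg m)) (bdeg m) by rewrite -E5 Db; nnlia2.
    by rewrite /= Ca Cb Q1 Q2.
  apply: H1 => //.
  rewrite deg_comp // (good_max Ga Gb) //.
  - by rewrite -!deg_comp // E3'.
  - by rewrite -Da E4.
  - by rewrite -Db E5.
Qed.

End Main.

Theorem theorem3p26 (k : nat) (G : kgraph k) :
  (finitely_aligned G -> ext_finitely_aligned G) /\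
  (row_finite G -> ext_row_finite G).
Proof.
split; [exact: ext_fa | exact: ext_rf].
Qed.
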